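(* Let ${\bold H}$ be a function with domain $\omega$ whose values ${\bold H}(i)$ are countable sets with at least two elements, and let $\bar n\in\mathbf{N}$. Then (1) $\mathbb{Q}^{\bold H}_{\bar n}$ is a forcing notion (i.e. its order is a preorder), and (2) for $p,q\in\mathbb{Q}^{\bold H}_{\bar n}$, $p\leq q$ holds if and only if $w^p\subseteq w^q$ and for each $i\in\omega$ either there is $j\in\omega$ with $\sigma^q_j\subseteq\sigma^p_i$, or there is $m\in\mathrm{dom}(w^q)\cap\mathrm{dom}(\sigma^p_i)$ with $w^q(m)\neq\sigma^p_i(m)$.
   Context: $\mathbf{N}$ is the set of sequences $\bar n=\langle n^0_m,n^1_m:m<\omega\rangle$ of integers with $4<n^0_m\leq n^1_m<n^0_{m+1}$ for all $m$, $2^{2(m^*+2)}\sum_{m<m^*}n^0_m n^1_m<n^0_{m^*}$ for every $m^*\in\omega$, and $\lim_{m\to\infty}(n^1_m)^{1/(2n^0_m)}=\infty$. Conditions of $\mathbb{Q}^{\bold H}_{\bar n}$ are sequences $p=(w^p,\sigma^p_0,\sigma^p_1,\dots)$ of finite functions with pairwise disjoint domains, $w^p(i),\sigma^p_j(i)\in{\bold H}(i)$, such that for some $m^*=m^*(p)<\omega$ there is a partition $\langle V^p_m:m^*\leq m<\omega\rangle$ of $\omega$ with $|V^p_m|\leq n^1_m2^{m^*}$ and $|\mathrm{dom}(\sigma^p_j)|\geq n^0_m/2^{m^*}$ for $j\in V^p_m$. $\mathrm{POS}(p)=\{\eta\in\prod_{i\in\omega}{\bold H}(i): w^p\subseteq\eta,\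 \sigma^p_j\not\subseteq\eta\text{ for all }j\}$, and $p\leq q$ iff $\mathrm{POS}(q)\subseteq\mathrm{POS}(p)$. *)

(* Defs.v *)
From Stdlib Require Import Reals Lra Lia Arith List.
Import ListNotations.
Open Scope R_scope.

Definition pfun (H : nat -> Type) : Type := forall i : nat, option (H i).

Definition in_dom {H : nat -> Type} (f : pfun H) (i : nat) : Prop := f i <> None.

Definition finite_fun {H : nat -> Type} (f : pfun H) : Prop :=
  exists N : nat, forall i : nat, (N <= i)%nat -> f i = None.

Definition pfun_sub {H : nat -> Type} (f g : pfun H) : Prop :=
  forall i (v : H i), f i = Some v -> g i = Some v.

Definition disjoint_dom {H : nat -> Type} (f g : pfun H) : Prop :=
  forall i, ~ (in_dom f i /\ in_dom g i).

Definition dom_card_ge {H : nat -> Type} (f : pfun H) (x : R) : Prop :=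
  exists l : list nat, NoDup l /\ (forall i, In i l -> in_dom f i) /\ x <= INR (length l).

Definition set_card_le (P : nat -> Prop) (k : nat) : Prop :=
  forall l : list nat, NoDup l -> (forall j, In j l -> P j) -> (length l <= k)%nat.

Fixpoint sum_lt (f : nat -> nat) (k : nat) : nat :=
  match k with
  | O => O
  | S k' => (sum_lt f k' + f k')%nat
  end.

Definition in_N (n0 n1 : nat -> nat) : Prop :=
  (forall m, 4 < n0 m /\ n0 m <= n1 m /\ n1 m < n0 (S m))%nat /\
  (forall mstar, (2 ^ (2 * (mstar + 2)) * sum_lt (fun m => n0 m * n1 m) mstar < n0 mstar)%nat) /\
  (forall M : R, exists K : nat, forall m : nat, (K <= m)%nat ->
      M < Rpower (INR (n1 m)) (/ (2 * INR (n0 m)))).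

Definition is_cond (H : nat -> Type) (n0 n1 : nat -> nat)
    (w : pfun H) (s : nat -> pfun H) : Prop :=
  finite_fun w /\ (forall j, finite_fun (s j)) /\
  (forall j, disjoint_dom w (s j)) /\
  (forall j k, j <> k -> disjoint_dom (s j) (s k)) /\
  exists mstar : nat, exists V : nat -> nat,
    (* V j = the index m of the block V_m containing j; the blocks
       <V_m : mstar <= m < omega> partition omega *)
    (forall j, (mstar <= V j)%nat) /\
    (forall m, (mstar <= m)%nat -> set_card_le (fun j => V j = m) (n1 m * 2 ^ mstar)) /\
    (forall j, dom_card_ge (s j) (INR (n0 (V j)) / 2 ^ mstar)).

Definition POS (H : nat -> Type) (w : pfun H) (s : nat -> pfun H)
    (eta : forall i : nat, H i) : Prop :=
  (forall i (v : H i), w i = Some v -> eta i = v) /\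
  (forall j, exists i (v : H i), s j i = Some v /\ eta i <> v).

Definition Qle (H : nat -> Type) (wp : pfun H) (sp : nat -> pfun H)
    (wq : pfun H) (sq : nat -> pfun H) : Prop :=
  forall eta, POS H wq sq eta -> POS H wp sp eta.

Definition countable_type (A : Type) : Prop :=
  exists f : A -> nat, forall x y, f x = f y -> x = y.

(* Main.v *)
Require Import Defs.
From Stdlib Require Import Reals Arith List.
From Stdlib Require Import Lra Lia Classical ClassicalEpsilon.

Lemma n0_mono (n0 n1 : nat -> nat) (hn : in_N n0 n1) :
  forall a d, (n0 a <= n0 (a + d))%nat.
Proof.
  destruct hn as [h _]. intros a d; induction d.
  - rewrite Nat.add_0_r; lia.
  - rewrite Nat.add_succ_r. specialize (h (a + d)%nat). lia.
Qed.

Lemma sum_lt_ge0 (f : nat -> nat) k : (f 0%nat <= sum_lt f (S k))%nat.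
Proof. induction k; simpl in *; lia. Qed.

Lemma n0_big (n0 n1 : nat -> nat) (hn : in_N n0 n1) :
  forall ms, (2 ^ ms < n0 ms)%nat.
Proof.
  intros ms. pose proof hn as [h [g _]]. destruct ms.
  - specialize (h 0%nat). simpl. lia.
  - specialize (g (S ms)).
    pose proof (sum_lt_ge0 (fun m => (n0 m * n1 m)%nat) ms) as hs. cbv beta in hs.
    pose proof (h 0%nat) as [h0a [h0b _]].
    assert (hp : (2 ^ S ms <= 2 ^ (2 * (S ms + 2)))%nat)
      by (apply Nat.pow_le_mono_r; lia).
    set (P := (2 ^ (2 * (S ms + 2)))%nat) in *.
    set (S0 := sum_lt (fun m => (n0 m * n1 m)%nat) (S ms)) in *.
    assert (1 <= S0)%nat.
    { assert (1 * 1 <= n0 0%nat * n1 0%nat)%nat by (apply Nat.mul_le_mono; lia). lia. }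
    assert (P * 1 <= P * S0)%nat by (apply Nat.mul_le_mono_l; lia). lia.
Qed.

Lemma two_points (H : nat -> Type) n0 n1 (hn : in_N n0 n1) w s :
  is_cond H n0 n1 w s -> forall j, exists k1 k2, k1 <> k2 /\
    in_dom (s j) k1 /\ in_dom (s j) k2.
Proof.
  intros [_ [_ [_ [_ [ms [V [HV1 [HV2 HV3]]]]]]]] j.
  destruct (HV3 j) as [l [Hnd [Hin Hle]]].
  assert (Hb : (2 ^ ms < n0 (V j))%nat).
  { pose proof (n0_big n0 n1 hn ms).
    pose proof (n0_mono n0 n1 hn ms (V j - ms)).
    replace (ms + (V j - ms))%nat with (V j) in H1 by (specialize (HV1 j); lia).
    lia. }
  assert (Hl : (n0 (V j) <= length l * 2 ^ ms)%nat).
  { apply INR_le. rewrite mult_INR, pow_INR. replace (INR 2) with 2 by (simpl; lra).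
    assert (hp : 0 < 2 ^ ms) by (apply pow_lt; lra).
    replace (INR (n0 (V j))) with (INR (n0 (V j)) / 2 ^ ms * 2 ^ ms) by (field; lra).
    apply Rmult_le_compat_r; lra. }
  set (Q := (2 ^ ms)%nat) in *.
  destruct l as [|a [|b l']]; cbn [length] in Hl; try lia.
  exists a, b. split.
  - intro e; subst. apply NoDup_cons_iff in Hnd. apply (proj1 Hnd); simpl; auto.
  - split; apply Hin; simpl; auto.
Qed.

Lemma build (H : nat -> Type) (H2 : forall i, exists a b : H i, a <> b)
  (wq : pfun H) (sq : nat -> pfun H) (C : pfun H) :
  (forall j k, j <> k -> disjoint_dom (sq j) (sq k)) ->
  (forall j, exists k v, sq j k = Some v /\ wq k = None /\ C k <> Some v) ->
  exists eta, POS H wq sq eta /\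
    (forall k c, wq k = None -> C k = Some c -> eta k = c).
Proof.
  intros Hdis Hj.
  set (P := fun k (x : H k) =>
    (forall a, wq k = Some a -> x = a) /\
    (forall c, wq k = None -> C k = Some c -> x = c) /\
    (forall j v, wq k = None -> C k = None -> sq j k = Some v -> x <> v)).
  assert (ex : forall k, exists x, P k x).
  { intro k. unfold P. destruct (wq k) as [a|] eqn:Ew.
    - exists a. split; [congruence|]. split; intros; discriminate.
    - destruct (C k) as [c|] eqn:Ec.
      + exists c. split; [discriminate|]. split; [congruence|]. intros; discriminate.
      + destruct (classic (exists j0 v0, sq j0 k = Some v0)) as [[j0 [v0 Hv0]]|Hn].
        * destruct (H2 k) as [a [b Hab]].
          destruct (classic (a = v0)) as [e|ne].
          -- exists b. split; [discriminate|]. split; [discriminate|].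
             intros j v _ _ Hv.
             destruct (Nat.eq_dec j j0) as [->|nj].
             ++ rewrite Hv0 in Hv. inversion Hv. subst. congruence.
             ++ exfalso. apply (Hdis j j0 nj k). unfold in_dom. split; congruence.
          -- exists a. split; [discriminate|]. split; [discriminate|].
             intros j v _ _ Hv.
             destruct (Nat.eq_dec j j0) as [->|nj].
             ++ rewrite Hv0 in Hv. inversion Hv. subst. congruence.
             ++ exfalso. apply (Hdis j j0 nj k). unfold in_dom. split; congruence.
        * destruct (H2 k) as [a _]. exists a. split; [discriminate|].
          split; [discriminate|]. intros j v _ _ Hv. exfalso; eauto. }
  exists (fun k => proj1_sig (constructive_indefinite_description _ (ex k))).
  split; [split|].
  - intros i v Hv. destruct (proj2_sig (constructive_indefinite_description _ (ex i))) as [h _].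
    apply h; auto.
  - intros j. destruct (Hj j) as [k [v [Hs [Hw Hc]]]]. exists k, v. split; auto.
    destruct (proj2_sig (constructive_indefinite_description _ (ex k))) as [_ [h1 h2]].
    destruct (C k) as [c|] eqn:Ec.
    + rewrite (h1 c Hw eq_refl). congruence.
    + apply (h2 j v Hw eq_refl Hs).
  - intros k c Hw Hc.
    destruct (proj2_sig (constructive_indefinite_description _ (ex k))) as [_ [h1 _]].
    apply h1; auto.
Qed.

Theorem proposition4p2 (H : nat -> Type)
  (HC : forall i, countable_type (H i))
  (H2 : forall i, exists a b : H i, a <> b)
  (n0 n1 : nat -> nat) (hn : in_N n0 n1) :
  (* (1) the order is a preorder on the conditions *)
  ((forall w s, is_cond H n0 n1 w s -> Qle H w s w s) /\
   (forall w1 s1 w2 s2 w3 s3,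
      is_cond H n0 n1 w1 s1 -> is_cond H n0 n1 w2 s2 -> is_cond H n0 n1 w3 s3 ->
      Qle H w1 s1 w2 s2 -> Qle H w2 s2 w3 s3 -> Qle H w1 s1 w3 s3)) /\
  (* (2) combinatorial characterization of the order *)
  (forall wp sp wq sq,
      is_cond H n0 n1 wp sp -> is_cond H n0 n1 wq sq ->
      (Qle H wp sp wq sq <->
       (pfun_sub wp wq /\
        forall i : nat,
          (exists j : nat, pfun_sub (sq j) (sp i)) \/
          (exists (m : nat) (a b : H m),
             wq m = Some a /\ sp i m = Some b /\ a <> b)))).
Proof.
  split; [split|].
  - intros w s _ eta h; exact h.
  - intros w1 s1 w2 s2 w3 s3 _ _ _ h12 h23 eta h. apply h12, h23, h.
  - intros wp sp wq sq Hp Hq.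
    pose proof (two_points H n0 n1 hn wq sq Hq) as Htwo.
    pose proof Hq as [_ [_ [Hwd [Hsd _]]]].
    split.
    + intros Hle. split.
      * intros i v Hv.
        destruct (wq i) as [a|] eqn:Ew.
        -- destruct (classic (a = v)) as [->|ne]; [reflexivity|exfalso].
           destruct (build H H2 wq sq (fun _ => None) Hsd) as [eta [Hpos _]].
           { intros j. destruct (Htwo j) as [k1 [k2 [_ [hk1 _]]]].
             unfold in_dom in hk1. destruct (sq j k1) as [u|] eqn:Es; [|congruence].
             exists k1, u. split; auto. split; [|discriminate].
             destruct (wq k1) eqn:E2; auto. exfalso; apply (Hwd j k1).
             unfold in_dom; split; congruence. }
           pose proof (Hle eta Hpos) as [hp _].
           apply ne. rewrite <- (proj1 Hpos i a Ew). apply hp; auto.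
        -- exfalso. destruct (H2 i) as [a [b Hab]].
           assert (hv' : exists v', v' <> v) by
             (destruct (classic (a = v)) as [->|]; [exists b; auto|exists a; auto]).
           destruct hv' as [v' hv'].
           set (C := fun k => match Nat.eq_dec i k with
                               | left e => Some (eq_rect i H v' k e)
                               | right _ => None end : option (H k)).
           assert (Ci : C i = Some v').
           { unfold C. destruct (Nat.eq_dec i i) as [e|n]; [|congruence].
             rewrite (Eqdep_dec.UIP_refl_nat _ e). reflexivity. }
           destruct (build H H2 wq sq C Hsd) as [eta [Hpos Hag]].
           { intros j. destruct (Htwo j) as [k1 [k2 [nk [hk1 hk2]]]].
             assert (exists k, k <> i /\ in_dom (sq j) k) as [k [nki hk]].
             { destruct (Nat.eq_dec k1 i); [exists k2|exists k1]; split; auto; congruence. }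
             unfold in_dom in hk. destruct (sq j k) as [u|] eqn:Es; [|congruence].
             exists k, u. split; auto. split.
             - destruct (wq k) eqn:E2; auto. exfalso; apply (Hwd j k).
               unfold in_dom; split; congruence.
             - unfold C. destruct (Nat.eq_dec i k); [congruence|discriminate]. }
           pose proof (Hle eta Hpos) as [hp _].
           apply hv'. rewrite <- (Hag i v' Ew Ci). apply hp; auto.
      * intros i. apply NNPP. intros Hn.
        apply not_or_and in Hn. destruct Hn as [Hn1 Hn2].
        destruct (build H H2 wq sq (sp i) Hsd) as [eta [Hpos Hag]].
        { intros j. assert (~ pfun_sub (sq j) (sp i)) as Hns by eauto.
          unfold pfun_sub in Hns.
          apply not_all_ex_not in Hns as [k Hk].
          apply not_all_ex_not in Hk as [u Hu].
          apply imply_to_and in Hu as [Hs Hsp].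
          exists k, u. split; auto. split; auto.
          destruct (wq k) eqn:E2; auto. exfalso; apply (Hwd j k).
          unfold in_dom; split; congruence. }
        pose proof (Hle eta Hpos) as [_ hp].
        destruct (hp i) as [k [v [Hs Hne]]].
        destruct (wq k) as [a|] eqn:Ew.
        -- apply Hn2. exists k, a, v. split; auto. split; auto.
           rewrite <- (proj1 Hpos k a Ew). auto.
        -- apply Hne. apply Hag; auto.
    + intros [Hsub Hi] eta [hw hs]. split.
      * intros i v Hv. apply hw, Hsub, Hv.
      * intros i. destruct (Hi i) as [[j Hj]|[m [a [b [Ha [Hb Hab]]]]]].
        -- destruct (hs j) as [k [v [Hk Hne]]]. exists k, v. split; auto.
        -- exists m, b. split; auto. rewrite (hw m a Ha). auto.
Qed.
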